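(* Let $\mathcal{K}$ be an $N$-dimensional asymptotic class (for some positive integer $N$) of finite trees, viewed as $\mathcal{L}_t$-structures, containing arbitrarily large finite members. Then there is $H<\omega$ such that every $A\in\mathcal{K}$ has height at most $H$.
   Context: Trees: the language $\mathcal{L}_t$ has a binary relation $\le$, a constant $\varepsilon$, a binary function $\sqcap$ and a unary function $\mathtt{pred}$. A tree is an $\mathcal{L}_t$-structure in which $\le$ is a partial order with every downset $\{a:a\le b\}$ well-ordered, $\varepsilon$ is the least element, $a\sqcap a'$ is the greatest common lower bound of $a,a'$, $\mathtt{pred}(a)$ is the greatest element strictly below $a$ for $a\ne\varepsilon$, and $\mathtt{pred}(\varepsilon)=\varepsilon$. The height of an element $a$ is the least $k$ with $\mathtt{pred}^k(a)=\varepsilon$, and the height of a finite tree is the maximum height of its elements. Asymptotic classes: for a positive integer $N$, a class $\mathcal{K}$ of finite $\mathcal{L}$-structures is an $N$-dimensional asymptotic class if for every $\mathcal{L}$-formula $\varphi(x,\bar y)$ with $|\bar y|=m$ there is a finite set of triples $(d_i,\mu_i,\theta_i(\bar y))$, $i<k$, with $d_i\in\{0,\frac1N,\dots,1\}$, $\mu_i\in[0,\infty)$ (with $\mu_i>0$ unless $d_i=0$), and $\theta_i$ $\mathcal{L}$-formulas, such that: (i) the $\theta_i$ partition $A^m$ in every $A\in\mathcal{K}$; (ii) for each $i$ and $\epsilon>0$ there is $M$ such that for all $A\in\mathcal{K}$ with $|A|\ge M$ and $\bar b\in A^m$ with $A\models\theta_i(\bar b)$, $\big||\varphi(A,\bar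 b)|-\mu_i|A|^{d_i}\big|\le\epsilon|A|^{d_i}$. *)

(* Defs.v *)
From Stdlib Require Import Reals.
From mathcomp Require Import all_boot.

Set Implicit Arguments.
Unset Strict Implicit.
Unset Printing Implicit Defensive.

Record Lt_struct := LtStruct {
  carrier :> finType;
  tle : rel carrier;
  teps : carrier;
  tmeet : carrier -> carrier -> carrier;
  tpred : carrier -> carrier
}.

Definition is_tree (A : Lt_struct) : Prop :=
  (forall a : A, tle a a) /\
  (forall a b : A, tle a b -> tle b a -> a = b) /\
  (forall a b c : A, tle a b -> tle b c -> tle a c) /\
  (forall b : A,
     (forall a a' : A, tle a b -> tle a' b -> tle a a' \/ tle a' a) /\
     (forall S : {set A}, (forall a, a \in S -> tle a b) -> S != set0 ->
        exists2 a, a \in S & forall a', a' \in S -> tle a a')) /\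
  (forall a : A, tle (teps A) a) /\
  (forall a a' : A, tle (tmeet a a') a /\ tle (tmeet a a') a' /\
     forall c : A, tle c a -> tle c a' -> tle c (tmeet a a')) /\
  (forall a : A, a <> teps A ->
     (tle (tpred a) a /\ tpred a <> a) /\
     forall c : A, tle c a -> c <> a -> tle c (tpred a)) /\
  tpred (teps A) = teps A.

Definition is_height (A : Lt_struct) (a : A) (h : nat) : Prop :=
  iter h (@tpred A) a = teps A /\
  forall k, k < h -> iter k (@tpred A) a <> teps A.

Definition tree_height_le (A : Lt_struct) (H : nat) : Prop :=
  forall a : A, exists h, is_height a h /\ h <= H.

Inductive term (n : nat) : Type :=
  | TVar of 'I_n
  | TEps
  | TMeet of term n & term n
  | TPred of term n.

Inductive formula : nat -> Type :=
  | FEq n : term n -> term n -> formula n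
  | FLe n : term n -> term n -> formula n
  | FNot n : formula n -> formula n
  | FAnd n : formula n -> formula n -> formula n
  | FOr n : formula n -> formula n -> formula n
  | FEx n : formula n.+1 -> formula n
  | FAll n : formula n.+1 -> formula n.

Definition scons (T : Type) (n : nat) (a : T) (e : 'I_n -> T) : 'I_n.+1 -> T :=
  fun i => match unlift ord0 i with Some j => e j | None => a end.

Fixpoint teval (A : Lt_struct) (n : nat) (e : 'I_n -> A) (t : term n) : A :=
  match t with
  | TVar i => e i
  | TEps => teps A
  | TMeet t1 t2 => tmeet (teval e t1) (teval e t2)
  | TPred t1 => tpred (teval e t1)
  end.

(* satisfaction A |= f[e]; boolean since A is finite *)
Fixpoint sat (A : Lt_struct) (n : nat) (f : formula n) : ('I_n -> A) -> bool :=
  match f in formula n return ('I_n -> A) -> bool with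
  | FEq _ t1 t2 => fun e => teval e t1 == teval e t2
  | FLe _ t1 t2 => fun e => tle (teval e t1) (teval e t2)
  | FNot _ g => fun e => ~~ sat g e
  | FAnd _ g h => fun e => sat g e && sat h e
  | FOr _ g h => fun e => sat g e || sat h e
  | FEx _ g => fun e => [exists a : A, sat g (scons a e)]
  | FAll _ g => fun e => [forall a : A, sat g (scons a e)]
  end.

(* For phi(x, y) with x the variable 0 and y = (y_1..y_m):
   |phi(A, b)| = #{a in A | A |= phi(a, b)} *)
Definition def_card (A : Lt_struct) (m : nat) (phi : formula m.+1)
  (b : 'I_m -> A) : nat := #|[pred a : A | sat phi (scons a b)]|.

(* The dimension d_i in {0, 1/N, ..., 1} is encoded as (d i)/N with
   d i <= N. *)
Definition asymptotic_class (N : nat) (K : Lt_struct -> Prop) : Prop :=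
  forall (m : nat) (phi : formula m.+1),
  exists (k : nat) (d : 'I_k -> nat) (mu : 'I_k -> R) (theta : 'I_k -> formula m),
    (forall i, d i <= N) /\
    (forall i, Rle 0 (mu i)) /\
    (forall i, d i <> 0 -> Rlt 0 (mu i)) /\
    (forall A, K A -> forall b : 'I_m -> A, exists! i, sat (theta i) b) /\
    (forall i (eps : R), Rlt 0 eps ->
       exists M : nat, forall A, K A -> M <= #|A| ->
         forall b : 'I_m -> A, sat (theta i) b ->
           Rle (Rabs (Rminus (INR (def_card phi b))
                        (Rmult (mu i) (Rpower (INR #|A|) (Rdiv (INR (d i)) (INR N))))))
               (Rmult eps (Rpower (INR #|A|) (Rdiv (INR (d i)) (INR N))))).

(* Main.v *)
Require Import Defs.
From Stdlib Require Import Reals Lra Psatz.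
From mathcomp Require Import all_boot.
Set Implicit Arguments.
Unset Strict Implicit.

Definition fc (A : Lt_struct) (b : A) := #|[pred x : A | tle x b]|.

Section Tree.
Variable A : Lt_struct.
Hypothesis HT : is_tree A.

Lemma fc_ge1 (b : A) : 1 <= fc b.
Proof.
case: HT => refl _. rewrite /fc (cardD1 b) inE /=. by rewrite (refl b).
Qed.

Lemma fc_le_card (b : A) : fc b <= #|A|.
Proof. exact: max_card. Qed.

Lemma fc_eps : fc (teps A) = 1.
Proof.
case: HT => refl [anti [_ [_ [epsl _]]]].
rewrite /fc -(card1 (teps A)); apply: eq_card => x; rewrite !inE.
apply/idP/eqP => [h|->]; last exact: refl.
exact: anti h (epsl x).
Qed.

Lemma fc_pred (b : A) : 2 <= fc b -> b <> teps A /\ fc (tpred b) = (fc b).-1.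
Proof.
move=> h2.
have hb : b <> teps A by move=> e; move: h2; rewrite e fc_eps.
split => //.
case: HT => refl [anti [trans [_ [epsl [_ [hpred _]]]]]].
have [[hpb hpn] hmax] := hpred b hb.
rewrite /fc [in RHS](cardD1 b) inE /= (refl b) /=.
apply: eq_card => x; rewrite !inE.
apply/idP/andP => [h|[hn h]].
- split; last exact: trans h hpb.
  apply/eqP => e; subst x. apply: hpn. exact: anti hpb h.
- apply: hmax => //. exact/eqP.
Qed.

Lemma fc_down n : forall b : A, fc b = n -> forall j, 1 <= j <= n -> exists b' : A, fc b' = j.
Proof.
elim: n => [|n IH] b hb j /andP [h1 h2]; first by move: (leq_trans h1 h2).
case: (ltngtP j n.+1) h2 => // [hlt _|-> _]; last by exists b.
have h2b : 2 <= fc b by rewrite hb; apply: leq_ltn_trans h1 hlt.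
have [_ hp] := fc_pred h2b.
apply: (IH (tpred b)); first by rewrite hp hb.
by rewrite h1.
Qed.

Lemma fc_height n : forall a : A, fc a = n.+1 -> is_height a n.
Proof.
elim: n => [|n IH] a ha.
- split => //=.
  case: HT => refl [anti [_ [_ [epsl _]]]].
  apply: anti (epsl a).
  move: ha; rewrite /fc (cardD1 a) inE /= (refl a) => /eqP; rewrite eqSS => /eqP/card0_eq h.
  apply/negP => hn. have := h (teps A). rewrite !inE epsl andbT => /negbT.
  by rewrite negbK => /eqP e; apply: hn; rewrite -e refl.
- have h2 : 2 <= fc a by rewrite ha.
  have [hne hp] := fc_pred h2.
  have [h1 h3] := IH (tpred a) ltac:(by rewrite hp ha).
  split; first by rewrite iterSr.
  case=> [|k] hk /=; first exact: hne.
  rewrite -iterS iterSr. exact: h3.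
Qed.
End Tree.

Section RealL.

Local Open Scope R_scope.
Lemma L0 (t mu c : R) : Rabs (t - mu * 1) <= 1 * 1 -> mu + 1 < c -> c <= t -> False.
Proof. move=> h1 h2 h3. have := Rle_trans _ _ _ (Rle_abs _) h1. lra. Qed.
Definition three : R := 3.
Lemma L1 (t t' mu s : R) : 0 < s -> 0 < mu -> 0 < t ->
  Rabs (t - mu*s) <= Rdiv mu three * s -> Rabs (t' - mu*s) <= Rdiv mu three * s -> INR 3 * t <= t' -> False.
Proof.
move=> hs hm ht h1 h2 h3; rewrite /three in h1 h2.
have e3 : INR 3 = 3 by simpl; lra. rewrite e3 in h3.
have a1 := Rle_trans _ _ _ (Rle_abs _) h2.
have a2 : - (t - mu*s) <= Rdiv mu three * s by rewrite -Rabs_Ropp in h1; exact: Rle_trans _ _ _ (Rle_abs _) h1.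
have : 0 < mu * s by apply: Rmult_lt_0_compat.
unfold three in *. have e : mu / 3 * s = (mu * s) / 3 by field. rewrite e in a1 a2. lra.
Qed.
End RealL.
Lemma INR_muln a b : INR (a * b) = Rmult (INR a) (INR b).
Proof. exact: mult_INR. Qed.

Definition phi0 : formula 2 := FLe (TVar (ord0 : 'I_2)) (TVar (ord_max : 'I_2)).
Lemma def_card_phi0 (A : Lt_struct) (b : A) : def_card phi0 (fun _ => b) = fc b.
Proof.
rewrite /def_card /fc; apply: eq_card => x. rewrite !inE /=.
rewrite /scons /= unlift_none. by case: unliftP.
Qed.

Theorem mainTheorem16 (N : nat) (K : Lt_struct -> Prop) :
  0 < N ->
  (forall A, K A -> is_tree A) ->
  asymptotic_class N K ->
  (forall n : nat, exists A, K A /\ n <= #|A|) ->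
  exists H : nat, forall A, K A -> tree_height_le A H.
Proof.
move=> hN hT hK _.
have [k [d [mu [theta [hd [hmu0 [hmupos [hpart happ]]]]]]]] := hK 1 phi0.
pose eps i := if d i == 0 then R1 else Rdiv (mu i) three.
have hM : forall i, exists M : nat, forall A, K A -> M <= #|A| ->
         forall b : 'I_1 -> A, sat (theta i) b ->
           Rle (Rabs (Rminus (INR (def_card phi0 b))
                        (Rmult (mu i) (Rpower (INR #|A|) (Rdiv (INR (d i)) (INR N))))))
               (Rmult (eps i) (Rpower (INR #|A|) (Rdiv (INR (d i)) (INR N)))).
  move=> i; apply: happ; rewrite /eps; case: eqP => h; first lra.
  apply: Rdiv_lt_0_compat; first exact: hmupos h. rewrite /three; lra.
have [Mf hMf] := fin_all_exists hM.
have [cf hcf] := fin_all_exists (fun i => INR_unbounded (Rplus (mu i) R1)).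
pose M := \max_(i < k) Mf i.
pose c := (\max_(i < k) cf i).+1.
exists (maxn M (c * 3 ^ k)).
move=> A KA a.
have ht := hT A KA.
have ha1 := fc_ge1 ht a.
exists (fc a).-1; split; first by apply: (fc_height ht); rewrite prednK.
rewrite leqNgt; apply/negP => hbig.
have hMA : M <= #|A|.
  apply: leq_trans (fc_le_card a); apply: leq_trans (leq_pred _).
  exact: ltnW (leq_ltn_trans (leq_maxl _ _) hbig).
have hb : forall j : 'I_k.+1, exists b : A, fc b = c * 3 ^ j.
  move=> j; apply: (fc_down ht (erefl (fc a))); apply/andP; split.
    by rewrite muln_gt0 expn_gt0.
  apply: leq_trans (leq_pred _); apply: ltnW; apply: leq_ltn_trans hbig.
  apply: leq_trans (leq_maxr _ _). rewrite leq_mul2l leq_pexp2l //.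
  by rewrite -ltnS.
have [bf hbf] := fin_all_exists hb.
have hc : forall j : 'I_k.+1, exists i, sat (theta i) (fun _ : 'I_1 => bf j).
  move=> j; have [i [hi _]] := hpart A KA (fun _ => bf j); by exists i.
have [g hg] := fin_all_exists hc.
have hApos : Rlt 0 (INR #|A|).
  apply: lt_0_INR; apply/ltP; exact: leq_trans ha1 (fc_le_card a).
have key : forall j j' : 'I_k.+1, j < j' -> g j = g j' -> False.
  move=> j j' hjj e.
  have hMi : Mf (g j) <= #|A| := leq_trans (leq_bigmax (g j)) hMA.
  have h1 := hMf (g j) A KA hMi _ (hg j).
  have h2 := hMf (g j') A KA (ltac:(by rewrite -e)) _ (hg j'); rewrite -e in h2.
  rewrite !def_card_phi0 !hbf in h1 h2.
  have hcpos : 0 < c * 3 ^ j by rewrite muln_gt0 expn_gt0.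
  rewrite /eps in h1 h2; case: eqP h1 h2 => hdi h1 h2.
  - rewrite hdi /= /Rdiv Rmult_0_l Rpower_O // in h1.
    apply: (L0 h1 (hcf (g j))).
    apply: le_INR; apply/leP.
    apply: leq_trans (leq_bigmax (g j)) _.
    apply: leq_trans (leqnSn _) _. rewrite -[X in X <= _]muln1 leq_mul2l expn_gt0 /=.
    by [].
  - apply: (L1 _ (hmupos _ hdi) _ h1 h2).
    + rewrite /Rpower; exact: exp_pos.
    + apply: lt_0_INR; exact/ltP.
    + rewrite -INR_muln; apply: le_INR; apply/leP.
      rewrite mulnCA -expnS leq_mul2l leq_pexp2l //.
have ginj : injective g.
  move=> j j' e; case: (ltngtP j j') => h.
  - by exfalso; apply: (key j j').
  - by exfalso; apply: (key j' j).
  - exact: val_inj.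
have := leq_card g ginj; rewrite !card_ord ltnn; by [].
Qed.
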